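(* Let $\mathcal{L}:\mathbb{R}^d\to\mathbb{R}$, $\mu>0$, $\theta\in\mathbb{R}^d$, $K\ge1$ an integer, $C>0$, and $p$ a probability vector on $\{1,\dots,L\}$ with all entries positive. Let $z\sim\mathcal{N}(0,I_d)$ and, independently, $(N_1,\dots,N_L)\sim\mathrm{Multinomial}(K,p)$. Define the clipped AdaLeZO estimator blockwise by $$\tilde g^{\mathrm{Ada},(l)}=\min\!\Big(\frac{1}{K p(l)},\,C\Big)\,N_l\,\hat g^{\mathrm{ZO},(l)}(\theta;z).$$ Then $$\mathbb{E}\big[\|\tilde g^{\mathrm{Ada}}\|^2\big]\le (C+1)\,\mathbb{E}\big[\|\hat g^{\mathrm{ZO}}(\theta;z)\|^2\big].$$
   Context: The parameter vector $\theta\in\mathbb{R}^d$ is partitioned into $L$ blocks (''layers'') $\theta=(\theta^{(1)},\dots,\theta^{(L)})$ with $\theta^{(l)}\in\mathbb{R}^{d_l}$, $\sum_l d_l=d$; for any $v\in\mathbb{R}^d$, $v^{(l)}$ denotes its $l$-th block. The dense symmetric zeroth-order estimator is $\hat g^{\mathrm{ZO}}(\theta;z)=\frac{\mathcal{L}(\theta+\mu z)-\mathcal{L}(\theta-\mu z)}{2\mu}\,z$ for $z\in\mathbb{R}^d$. $\mathrm{Multinomial}(K,p)$ denotes the counts $N_l$ of the value $l$ among $K$ i.i.d. draws from $p$. Norms are Euclidean; expectations may be $+\infty$. *)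

(* Defs.v *)
From HB Require Import structures.
From mathcomp Require Import all_boot all_order all_algebra.
From mathcomp Require Import all_classical all_reals all_analysis.
Set Implicit Arguments. Unset Strict Implicit. Unset Printing Implicit Defensive.
Import Order.TTheory GRing.Theory Num.Theory.
Local Open Scope classical_set_scope.
Local Open Scope ring_scope.

(* Vectors in R^d are d.-tuples (equipped in MathComp-Analysis with the
   product sigma-algebra of the Borel sigma-algebras of the coordinates). *)
Definition vadd (R : realType) (d : nat) (u v : d.-tuple R) : d.-tuple R :=
  [tuple tnth u i + tnth v i | i < d].
Definition vscale (R : realType) (d : nat) (a : R) (v : d.-tuple R) : d.-tuple R :=
  [tuple a * tnth v i | i < d].

Definition sqnorm (R : realType) (d : nat) (v : d.-tuple R) : R :=
  \sum_(i < d) tnth v i ^+ 2.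

Definition gZO (R : realType) (d : nat) (Lf : d.-tuple R -> R) (mu : R)
    (theta z : d.-tuple R) : d.-tuple R :=
  vscale ((Lf (vadd theta (vscale mu z)) - Lf (vadd theta (vscale (- mu) z)))
          / (2 * mu)) z.

(* Clipped AdaLeZO estimator: coordinate i belongs to layer blk i, and its
   block is multiplied by min(1/(K p(l)), C) * N_l. *)
Definition gAda (R : realType) (d L : nat) (blk : 'I_d -> 'I_L)
    (K : nat) (p : 'I_L -> R) (C : R) (Nc : L.-tuple nat)
    (g : d.-tuple R) : d.-tuple R :=
  [tuple Num.min (1 / (K%:R * p (blk i))) C * (tnth Nc (blk i))%:R * tnth g i
   | i < d].

Definition multinomial_pmf (R : realType) (L K : nat) (p : 'I_L -> R)
    (n : L.-tuple nat) : R :=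
  if (\sum_(l < L) tnth n l)%N == K then
    (K`!)%:R / (\prod_(l < L) (tnth n l)`!%:R) * \prod_(l < L) p l ^+ tnth n l
  else 0.

(* Main.v *)
Require Import Defs.
From HB Require Import structures.
From mathcomp Require Import all_boot all_order all_algebra.
From mathcomp Require Import all_classical all_reals all_analysis.
From mathcomp Require Import measurable_realfun.
From mathcomp Require Import ring lra.
Import Order.TTheory GRing.Theory Num.Theory.
Local Open Scope classical_set_scope.
Local Open Scope ring_scope.

Fixpoint comps (L K : nat) {struct L} : seq (L.-tuple nat) :=
  match L return seq (L.-tuple nat) with
  | 0 => if K == 0%N then [:: [tuple]] else [::]
  | L'.+1 => [seq cons_tuple a t | a <- iota 0 K.+1, t <- comps L' (K - a)]
  end.

Lemma comps_sum L K n : n \in comps L K -> (\sum_(l < L) tnth n l)%N = K.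
Proof.
elim: L K n => [|L IH] K n.
  by case: K => [|K] //=; rewrite big_ord0.
move=> hn; have [a [t [ha ht En]]] := allpairsPdep hn; subst n.
rewrite big_ord_recl tnth0.
under eq_bigr do rewrite tnthS.
rewrite (IH _ _ ht); move: ha; rewrite mem_iota add0n ltnS => ha.
by rewrite subnKC.
Qed.

Lemma comps_uniq L K : uniq (comps L K).
Proof.
elim: L K => [|L IH] K; first by case: K.
apply: allpairs_uniq_dep => [|a _|]; first exact: iota_uniq.
  exact: IH.
move=> [a t] [b u] _ _ /= E.
have Eab : a = b by move: (congr1 (fun v => tnth v ord0) E); rewrite !tnth0.
subst b; congr existT; apply: val_inj => /=.
by move: (congr1 (fun v => behead (tval v)) E).
Qed.

Definition mc (R : numFieldType) L K (p : 'I_L -> R) (n : L.-tuple nat) : R :=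
 (K`!)%:R / (\prod_(l < L) ((tnth n l)`!)%:R) * \prod_(l < L) p l ^+ tnth n l.
Arguments mc {R L}.

Lemma prod_cons_tnth (R : numFieldType) L (F : nat -> R) a (t : L.-tuple nat) :
  \prod_(i < L) F (tnth (cons_tuple a t) (lift ord0 i)) = \prod_(i < L) F (tnth t i).
Proof. by apply: eq_bigr => i _; rewrite tnthS. Qed.
Lemma prod_cons_tnth' (R : numFieldType) L (F : 'I_L -> nat -> R) a (t : L.-tuple nat) :
  \prod_(i < L) F i (tnth (cons_tuple a t) (lift ord0 i)) = \prod_(i < L) F i (tnth t i).
Proof. by apply: eq_bigr => i _; rewrite tnthS. Qed.

Lemma mc_cons (R : numFieldType) L K (p : 'I_L.+1 -> R) a (t : L.-tuple nat) :
  (a <= K)%N ->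
  mc K p (cons_tuple a t) =
  ('C(K, a))%:R * p ord0 ^+ a * mc (K - a) (fun i => p (lift ord0 i)) t.
Proof.
move=> aK; rewrite /mc !big_ord_recl !tnth0.
rewrite (@prod_cons_tnth _ _ (fun n => (n`!)%:R)) (@prod_cons_tnth' _ _ (fun i n => p (lift ord0 i) ^+ n)).
rewrite -(bin_fact aK) !natrM.
have f0 : forall m, (m`!)%:R != 0 :> R by move=> m; rewrite pnatr_eq0 -lt0n fact_gt0.
have P0 : \prod_(i < L) ((tnth t i)`!)%:R != 0 :> R.
  by apply/prodf_neq0 => i _; exact: f0.
move: (f0 a) (f0 (K - a)%N) P0.
set A := (a`!)%:R; set B := ((K-a)`!)%:R; set PP := \prod_(i < L) _.
move=> A0 B0 P0; field.
by rewrite A0 P0.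
Qed.

Lemma comps_step (R : numFieldType) L K (F : L.+1.-tuple nat -> R) :
  \sum_(n <- comps L.+1 K) F n =
  \sum_(0 <= a < K.+1) \sum_(t <- comps L (K - a)) F (cons_tuple a t).
Proof. by rewrite big_allpairs_dep /index_iota subn0. Qed.



Lemma binom_ffact (R : comNzRingType) (x y : R) j K :
  \sum_(a < K.+1) ('C(K, a) * a ^_ j)%:R * x ^+ (a - j) * y ^+ (K - a)
  = (K ^_ j)%:R * (x + y) ^+ (K - j).
Proof.
elim: j K => [|j IH] K.
  rewrite ffactn0 mul1r subn0 (addrC x y) exprDn.
  apply: eq_bigr => a _.
  rewrite ffactn0 muln1 subn0 -mulr_natl; ring.
case: K => [|K].
  by rewrite big_ord1 /= ffact0n /= muln0 !mul0r.
rewrite big_ord_recl /= ffact0n /= muln0 mul0r mul0r add0r.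
rewrite ffactSS natrM -mulrA -IH big_distrr /=; apply: eq_bigr => i _.
rewrite /bump /= add1n ffactSS subSS mulnA (mulnC _ i.+1) -mul_bin_diag /=.
rewrite !natrM; ring.
Qed.

Lemma mc_sum (R : numFieldType) L (p : 'I_L -> R) K :
  \sum_(n <- comps L K) mc K p n = (\sum_(i < L) p i) ^+ K.
Proof.
elim: L p K => [|L IH] p K.
  case: K => [|K] /=.
    by rewrite big_seq1 /mc !big_ord0 expr0 fact0 divr1 mulr1.
  by rewrite big_nil big_ord0 expr0n.
rewrite comps_step big_ord_recl.
have := @binom_ffact _ (p ord0) (\sum_(i < L) p (lift ord0 i)) 0 K.
rewrite ffactn0 mul1r subn0 => <-.
rewrite big_mkord; apply: eq_bigr => a _.
rewrite (eq_big_seq (fun t => ('C(K, a))%:R * p ord0 ^+ a *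
   mc (K - a)%N (fun i => p (lift ord0 i)) t)); last first.
  by move=> t _; rewrite mc_cons // -ltnS.
by rewrite -big_distrr /= IH ffactn0 muln1 subn0.
Qed.

Lemma mc_mom (R : numFieldType) L (p : 'I_L -> R) K (l : 'I_L) j :
  \sum_(n <- comps L K) mc K p n * ((tnth n l) ^_ j)%:R =
  (K ^_ j)%:R * p l ^+ j * (\sum_(i < L) p i) ^+ (K - j).
Proof.
elim: L p K l => [|L IH] p K l; first by case: l.
rewrite comps_step big_ord_recl.
set Q := \sum_(i < L) p (lift ord0 i).
case: (unliftP ord0 l) => [l'|] ->.
- rewrite big_rev_mkord subn0.
  have E := @binom_ffact _ Q (p ord0) j K.
  rewrite (addrC (p ord0) Q) mulrAC -E big_distrl /=; apply: eq_bigr => a _.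
  have aK : (a <= K)%N by rewrite -ltnS.
  rewrite subSS.
  rewrite (eq_big_seq (fun t => ('C(K, K - a))%:R * p ord0 ^+ (K - a) *
     (mc (K - (K - a))%N (fun i => p (lift ord0 i)) t * ((tnth t l') ^_ j)%:R))); last first.
    by move=> t _; rewrite mc_cons ?leq_subr // tnthS mulrA.
  rewrite -big_distrr /= IH subKn // bin_sub // natrM; ring.
- have E := @binom_ffact _ (p ord0) Q j K.
  rewrite mulrAC -E big_distrl /= big_mkord; apply: eq_bigr => a _.
  have aK : (a <= K)%N by rewrite -ltnS.
  rewrite (eq_big_seq (fun t => ('C(K, a))%:R * p ord0 ^+ a * (a ^_ j)%:R *
     mc (K - a)%N (fun i => p (lift ord0 i)) t)); last first.
    by move=> t _; rewrite mc_cons // tnth0; ring.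
  rewrite -big_distrr /= mc_sum -/Q.
  case: (leqP j a) => ja.
    have -> : p ord0 ^+ a = p ord0 ^+ (a - j) * p ord0 ^+ j by rewrite -exprD subnK.
    rewrite natrM; ring.
  by rewrite ffact_small // muln0 mulr0 !mul0r.
Qed.

Lemma coef_bound (R : realType) (K : nat) (q C : R) :
  (1 <= K)%N -> 0 < q -> 0 < C ->
  (Num.min (1 / (K%:R * q)) C) ^+ 2 * ((K ^_ 2)%:R * q ^+ 2 + K%:R * q) <= C + 1.
Proof.
move=> K1 q0 C0.
have x0 : 0 < K%:R * q by rewrite mulr_gt0 // ltr0n.
set x := K%:R * q in x0 *.
have ha0 : 0 <= (K ^_ 2)%:R * q ^+ 2 by rewrite mulr_ge0 ?ler0n ?exprn_ge0 ?ltW.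
have ha1 : (K ^_ 2)%:R * q ^+ 2 <= x ^+ 2.
  rewrite /x exprMn -natrX; apply: ler_wpM2r; first by rewrite exprn_ge0 ?ltW.
  by rewrite ler_nat ffactnS ffactn1 leq_mul // leq_pred.
set a := (K ^_ 2)%:R * q ^+ 2 in ha0 ha1 *.
set c := Num.min _ _.
have [c0 [cC cx]] : 0 <= c /\ c <= C /\ c * x <= 1.
  rewrite /c; case: (leP (1 / x) C) => h.
    rewrite mul1r in h; rewrite mul1r mulVf ?gt_eqF //; split; last by split.
    by rewrite invr_ge0 ltW.
  split; first exact: ltW.
  split => //.
  by rewrite -ler_pdivlMr // ltW.
have cx0 : 0 <= c * x by rewrite mulr_ge0 // ltW.
nra.
Qed.

Lemma sq_ffact (R : numFieldType) (m : nat) :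
  (m%:R : R) ^+ 2 = (m ^_ 2)%:R + (m ^_ 1)%:R.
Proof.
rewrite -natrX -natrD; congr (_%:R).
by case: m => // m; rewrite ffactSS ffactn1 ffactn1 -mulnSr.
Qed.

Lemma mom2 (R : numFieldType) L (p : 'I_L -> R) K (l : 'I_L) :
  \sum_(i < L) p i = 1 ->
  \sum_(n <- comps L K) mc K p n * ((tnth n l)%:R) ^+ 2 =
  (K ^_ 2)%:R * p l ^+ 2 + K%:R * p l.
Proof.
move=> p1.
under eq_bigr do rewrite sq_ffact mulrDr.
by rewrite big_split /= !mc_mom p1 !expr1n !mulr1 ffactn1 expr1.
Qed.

Lemma pointwise (R : realType) d L (blk : 'I_d -> 'I_L) K (p : 'I_L -> R) C
    (g : d.-tuple R) :
  (1 <= K)%N -> 0 < C -> (forall l, 0 < p l) -> \sum_(l < L) p l = 1 ->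
  \sum_(n <- comps L K) mc K p n * sqnorm (gAda blk K p C n g)
  <= (C + 1) * sqnorm g.
Proof.
move=> K1 C0 p0 p1.
rewrite /sqnorm big_distrr /=.
under eq_bigr do rewrite big_distrr /=.
rewrite exchange_big /=; apply: ler_sum => i _.
rewrite (eq_bigr (fun n => (Num.min (1 / (K%:R * p (blk i))) C) ^+ 2 * tnth g i ^+ 2 *
   (mc K p n * ((tnth n (blk i))%:R) ^+ 2))); last first.
  by move=> n _; rewrite tnth_mktuple; ring.
rewrite -big_distrr /= mom2 // mulrAC.
apply: ler_wpM2r; first exact: sqr_ge0.
exact: coef_bound.
Qed.

Section intrestr.
Local Open Scope ereal_scope.
Context d (T : measurableType d) (R : realType).
Variables (m : {measure set T -> \bar R}) (E : set T) (mE : measurable E).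
Import HBNNSimple.

Lemma int_mrestr_nnsfun (h : {nnsfun T >-> R}) :
  \int[mrestr m mE]_x (h x)%:E = \int[m]_(x in E) (h x)%:E.
Proof.
under [LHS]eq_integral do rewrite fimfunE -fsumEFin//.
rewrite [LHS]ge0_integral_fsum//; last 2 first.
  - by move=> r; exact/measurable_EFinP/measurableT_comp.
  - by move=> n x _; rewrite EFinM nnfun_muleindic_ge0.
under [RHS]eq_integral do rewrite fimfunE -fsumEFin//.
rewrite [RHS]ge0_integral_fsum//; last 2 first.
  - by move=> r; apply/measurable_EFinP/measurableT_comp => //; exact: measurable_funTS.
  - by move=> n x _; rewrite EFinM nnfun_muleindic_ge0.
apply: eq_fsbigr => r _; rewrite !integralZl_indic_nnsfun//.
by rewrite !integral_indic//= /mrestr setIT.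
Qed.

Lemma int_mrestr (f : T -> \bar R) : measurable_fun setT f -> (forall x, 0 <= f x) ->
  \int[mrestr m mE]_x f x = \int[m]_(x in E) f x.
Proof.
move=> mf f0; pose f_ := nnsfun_approx measurableT mf.
transitivity (limn (fun n => \int[mrestr m mE]_x (f_ n x)%:E)).
  rewrite -monotone_convergence//=.
  - apply: eq_integral => x /[!inE] xD; apply/esym/cvg_lim => //=.
    exact: cvg_nnsfun_approx.
  - by move=> n; apply/measurable_EFinP.
  - by move=> n x _; rewrite lee_fin.
  - by move=> x _ a b ab; rewrite lee_fin//; exact/lefP/nd_nnsfun_approx.
transitivity (limn (fun n => \int[m]_(x in E) (f_ n x)%:E)).
  by congr (limn _); apply/funext => n; exact: int_mrestr_nnsfun.
rewrite -monotone_convergence//=.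
- apply: eq_integral => x /[!inE] xD; apply/cvg_lim => //=.
  exact: cvg_nnsfun_approx.
- by move=> n; exact/measurable_EFinP/measurable_funTS.
- by move=> n x _; rewrite lee_fin.
- by move=> x _ a b ab; rewrite lee_fin//; exact/lefP/nd_nnsfun_approx.
Qed.

End intrestr.


Lemma indep_int d1 d2 (T : measurableType d1) (Y : measurableType d2) (R : realType)
  (P : probability T R) (z : T -> Y) (E : set T) (mE : measurable E) (k : R)
  (mz : measurable_fun setT z)
  (hind : forall A, measurable A -> P (z @^-1` A `&` E) = (P (z @^-1` A) * k%:E)%E)
  (h : Y -> \bar R) :
  measurable_fun setT h -> (forall y, (0 <= h y)%E) -> (0 <= k) ->
  (\int[P]_(x in E) h (z x) = k%:E * \int[P]_x h (z x))%E.
Proof.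
move=> mh h0 k0.
have mhz : measurable_fun setT (h \o z) by exact: measurableT_comp.
rewrite -(@int_mrestr _ _ _ P E mE _ mhz) //.
have := @ge0_integral_pushforward _ _ _ _ _ z mz (mrestr P mE) setT h measurableT mh (fun y _ => h0 y).
rewrite preimage_setT => <-.
pose zf : {mfun T >-> Y} := HB.pack z (isMeasurableFun.Build _ _ _ _ _ mz).
rewrite (@eq_measure_integral _ _ _ setT (mscale (NngNum k0) (distribution P zf))); last first.
  move=> A mA _; rewrite /mscale /= /pushforward /mrestr.
  rewrite hind // muleC.
  by [].
rewrite (@ge0_integral_mscale _ _ _ (distribution P zf) setT measurableT (NngNum k0) h mh); last by move=> y _; exact: h0.
congr (_ * _)%E.
have := @ge0_integral_pushforward _ _ _ _ _ z mz P setT h measurableT mh (fun y _ => h0 y).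
by rewrite preimage_setT => ->.
by move=> x; exact: h0.
Qed.

Lemma mvaff (R : realType) d (theta : d.-tuple R) (a : R) :
  measurable_fun setT (fun v : d.-tuple R => vadd theta (vscale a v)).
Proof.
apply/measurable_fun_tnthP => i /=.
rewrite (_ : _ \o _ = (fun v => tnth theta i + a * tnth v i)); last first.
  by apply/funext => v; rewrite /= /vadd tnth_mktuple /vscale tnth_mktuple.
apply: measurable_funD => //; apply: measurable_funM => //; exact: measurable_tnth.
Qed.

Lemma mgZO (R : realType) d (Lf : d.-tuple R -> R) (mu : R) (theta : d.-tuple R) i :
  measurable_fun setT Lf ->
  measurable_fun setT (fun v => tnth (gZO Lf mu theta v) i).
Proof.
move=> mLf.
have -> : (fun v => tnth (gZO Lf mu theta v) i) =
   (fun v => (Lf (vadd theta (vscale mu v)) - Lf (vadd theta (vscale (- mu) v))) / (2 * mu) * tnth v i).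
  by apply/funext => v; rewrite /gZO /vscale tnth_mktuple.
apply: measurable_funM; last exact: measurable_tnth.
apply: measurable_funM => //; apply: measurable_funB.
  exact: (measurableT_comp mLf (@mvaff _ _ theta _)).
exact: (measurableT_comp mLf (@mvaff _ _ theta _)).
Qed.

Lemma mNc d (T : measurableType d) L (Nc : T -> L.-tuple nat)
    (hE : forall n, measurable [set x | Nc x = n]) d' (U : measurableType d')
    (phi : L.-tuple nat -> U) :
  measurable_fun setT (fun x => phi (Nc x)).
Proof.
move=> _ B mB; rewrite setTI.
have -> : (fun x => phi (Nc x)) @^-1` B = \bigcup_(n : L.-tuple nat)
    (if pselect (B (phi n)) is left _ then [set x | Nc x = n] else set0).
  apply/seteqP; split => x /=.
    by move=> Bx; exists (Nc x) => //; case: pselect.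
  by move=> [n _]; case: pselect => // Bn ->.
apply: countable_bigcupT_measurable; first exact: countableP.
by move=> n; case: pselect => _ //; exact: hE.
Qed.

Theorem mainTheorem4 (R : realType) (d L : nat) (blk : 'I_d -> 'I_L)
    (Lf : d.-tuple R -> R) (mu : R) (theta : d.-tuple R) (K : nat) (C : R)
    (p : 'I_L -> R)
    (dT : measure_display) (T : measurableType dT) (P : probability T R)
    (z : T -> d.-tuple R) (Nc : T -> L.-tuple nat) :
  measurable_fun setT Lf ->
  0 < mu -> (1 <= K)%N -> 0 < C ->
  (forall l, 0 < p l) -> \sum_(l < L) p l = 1 ->
  (* z is a random vector with law N(0, I_d) *)
  measurable_fun setT z ->
  (forall B : 'I_d -> set R, (forall i, measurable (B i)) ->
     P (z @^-1` [set v | forall i, B i (tnth v i)])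
     = (\prod_(i < d) normal_prob 0 1 (B i))%E) ->
  (* (N_1, ..., N_L) ~ Multinomial(K, p) *)
  (forall n : L.-tuple nat, measurable [set x | Nc x = n]) ->
  (forall n : L.-tuple nat,
     P [set x | Nc x = n] = (multinomial_pmf K p n)%:E) ->
  (* z and N are independent *)
  (forall (A : set (d.-tuple R)) (n : L.-tuple nat), measurable A ->
     P (z @^-1` A `&` [set x | Nc x = n])
     = (P (z @^-1` A) * P [set x | Nc x = n])%E) ->
  (\int[P]_x (sqnorm (gAda blk K p C (Nc x) (gZO Lf mu theta (z x))))%:E
   <= (C + 1)%:E * \int[P]_x (sqnorm (gZO Lf mu theta (z x)))%:E)%E.
Proof.
move=> mLf mu0 K1 C0 p0 p1 mz _ mE hE hind.
pose S := comps L K.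
pose E (n : L.-tuple nat) := [set x | Nc x = n].
pose c (i : 'I_d) := Num.min (1 / (K%:R * p (blk i))) C.
pose Phi n v := sqnorm (gAda blk K p C n (gZO Lf mu theta v)).
have mcge0 n : 0 <= mc K p n.
  by rewrite /mc mulr_ge0 ?divr_ge0 ?ler0n ?prodr_ge0 // => l _; rewrite exprn_ge0 // ltW.
have sq0 (e : nat) (v : e.-tuple R) : 0 <= sqnorm v.
  by rewrite /sqnorm sumr_ge0 // => i _; exact: sqr_ge0.
have mF : measurable_fun setT (fun x => sqnorm (gAda blk K p C (Nc x) (gZO Lf mu theta (z x)))).
  have -> : (fun x => sqnorm (gAda blk K p C (Nc x) (gZO Lf mu theta (z x)))) =
     (fun x => \sum_(i < d) (c i * (tnth (Nc x) (blk i))%:R * tnth (gZO Lf mu theta (z x)) i) ^+ 2).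
    by apply/funext => x; rewrite /sqnorm; apply: eq_bigr => i _; rewrite tnth_mktuple.
  apply: measurable_sum => i; apply: measurable_funX; apply: measurable_funM.
    apply: measurable_funM => //.
    exact: (@mNc _ _ _ Nc mE _ _ (fun n => (tnth n (blk i))%:R : R)).
  exact: (measurableT_comp (@mgZO _ _ Lf mu theta i mLf) mz).
have mPhi n : measurable_fun setT (Phi n).
  have -> : Phi n =
     (fun v => \sum_(i < d) (c i * (tnth n (blk i))%:R * tnth (gZO Lf mu theta v) i) ^+ 2).
    by apply/funext => x; rewrite /Phi /sqnorm; apply: eq_bigr => i _; rewrite tnth_mktuple.
  apply: measurable_sum => i; apply: measurable_funX; apply: measurable_funM => //.
  exact: mgZO.
have mG : measurable_fun setT (fun v => sqnorm (gZO Lf mu theta v)).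
  rewrite /sqnorm; apply: measurable_sum => i; apply: measurable_funX; exact: mgZO.
have PEn n : n \in S -> P (E n) = (mc K p n)%:E.
  by move=> nS; rewrite hE /multinomial_pmf (@comps_sum _ _ _ nS) eqxx.
pose EU := \big[setU/set0]_(n <- S) E n.
have mEU : measurable EU by apply: bigsetU_measurable => n _; exact: mE.
have tE : trivIset [set` S] E.
  by move=> i j _ _ [x [/= hi hj]]; rewrite -hi -hj.
have PEU : P EU = 1%E.
  have := integral_cst P mEU 1%E; rewrite mul1e => <-.
  rewrite ge0_integral_bigsetU //; last exact: comps_uniq.
  rewrite (eq_big_seq (fun n => (mc K p n)%:E)); last first.
    by move=> n nS; rewrite integral_cst ?mul1e; [exact: PEn|exact: mE].
  by rewrite sumEFin mc_sum p1 expr1n.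
have PEUc : P (~` EU) = 0%E by rewrite probability_setC // PEU subee.
have mFE : measurable_fun setT
    (fun x => (sqnorm (gAda blk K p C (Nc x) (gZO Lf mu theta (z x))))%:E).
  exact/measurable_EFinP.
have hsplit : [set: T] = EU `|` ~` EU by rewrite setUv.
rewrite {1}hsplit ge0_integral_setU //; last 3 first.
- by rewrite -hsplit.
- by move=> x _; rewrite lee_fin sq0.
- by rewrite disj_set2E setICr.
rewrite (null_set_integral (measurableC mEU) _ PEUc); last exact: measurable_funTS.
rewrite adde0 ge0_integral_bigsetU //; last 3 first.
- exact: comps_uniq.
- exact: measurable_funTS.
- by move=> x _; rewrite lee_fin sq0.
rewrite (eq_big_seq (fun n => \int[P]_x ((mc K p n * Phi n (z x))%:E))%E); last first.
  move=> n nS.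
  rewrite (eq_integral (fun x => (Phi n (z x))%:E)); last first.
    by move=> x; rewrite inE /= => ->.
  have hindn : forall A, measurable A ->
      P (z @^-1` A `&` E n) = (P (z @^-1` A) * (mc K p n)%:E)%E.
    by move=> A mA; rewrite hind // PEn.
  rewrite (@indep_int _ _ _ _ _ P z (E n) (mE n) (mc K p n) mz hindn
     (fun v => (Phi n v)%:E)); last 3 first.
  - exact/measurable_EFinP.
  - by move=> v; rewrite lee_fin sq0.
  - exact: mcge0.
  under [RHS]eq_integral do rewrite EFinM.
  rewrite ge0_integralZl //; last 2 first.
  - by move=> x _; rewrite lee_fin sq0.
  - by rewrite lee_fin.
  exact/measurable_EFinP/(measurableT_comp (mPhi n) mz).
rewrite -ge0_integral_sum //; last 2 first.
- move=> n; apply/measurable_EFinP; apply: measurable_funM => //.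
  exact: (measurableT_comp (mPhi n) mz).
- by move=> n x _; rewrite lee_fin mulr_ge0 // sq0.
under eq_integral do rewrite sumEFin.
apply: (@le_trans _ _ (\int[P]_x ((C + 1) * sqnorm (gZO Lf mu theta (z x)))%:E)%E).
  apply: ge0_le_integral => //.
  - by move=> x _; rewrite lee_fin sumr_ge0 // => n _; rewrite mulr_ge0 // sq0.
  - apply/measurable_EFinP; apply: measurable_sum => n; apply: measurable_funM => //.
    exact: (measurableT_comp (mPhi n) mz).
  - apply/measurable_EFinP; apply: measurable_funM => //.
    exact: (measurableT_comp mG mz).
  by move=> x _; rewrite lee_fin; exact: pointwise.
under eq_integral do rewrite EFinM.
rewrite ge0_integralZl //.
- exact/measurable_EFinP/(measurableT_comp mG mz).
- by move=> x _; rewrite lee_fin sq0.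
- by rewrite lee_fin addr_ge0 // ltW.
exact: measurableC.
Qed.
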